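(* Let $p>1$, $\kappa\in\mathbb{R}$, $h>0$ and $\sigma<1$. Suppose $\eta:\mathbb{R}\to\mathbb{C}$ is a nontrivial finite energy solution (i.e. $\eta\in L^\infty(\mathbb{R})\cap\dot H^1(\mathbb{R})$) of $$(\kappa+ih\sigma)\eta-ih\Lambda_z\eta-\eta_{zz}-\delta|\eta|^{p-1}\eta=0,\qquad \Lambda_z=\tfrac12+z\partial_z.$$ Then $\sigma>0$ and $$0=(1-\sigma)\int_{-\infty}^{+\infty}|\eta_z|^2\,dz-\Big(\frac12-\sigma\Big)|\eta(0)|^{p+1}.$$ Consequently, if $\sigma=\sigma_c:=\frac12-\frac1{p-1}$, then $E(\eta)=0$, where $E(\eta)=\frac12\int_{-\infty}^{+\infty}|\eta_z|^2\,dz-\frac1{p+1}|\eta(0)|^{p+1}$.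
   Context: $\delta$ is the Dirac delta at the origin. The equation means: $(\kappa+ih\sigma)\eta-ih(\frac12\eta+z\eta_z)-\eta_{zz}=0$ for $z\neq0$, $\eta$ is continuous at $z=0$ (i.e. $\eta(0-)=\eta(0+)=:\eta(0)$), and $\eta_z(0+)-\eta_z(0-)=-|\eta(0)|^{p-1}\eta(0)$, where $f(0\pm)$ denote one-sided limits. *)

(* Defs.v *)
From Stdlib Require Import Reals.
From Coquelicot Require Import Coquelicot.
Open Scope R_scope.

(* Real power x^a for x >= 0 with the convention 0^a = 0 (used with a > 0).
   (Stdlib's Rpower 0 a = 1, which is why we do not use it directly.) *)
Definition rpow (x a : R) : R := if Rle_dec x 0 then 0 else Rpower x a.

Definition dirichlet (eta' : R -> C) : R :=
  RInt_gen (fun z => (Cmod (eta' z)) ^ 2) (Rbar_locally m_infty) (Rbar_locally p_infty).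

Definition energy (p : R) (eta eta' : R -> C) : R :=
  / 2 * dirichlet eta' - / (p + 1) * rpow (Cmod (eta 0)) (p + 1).

(* Main.v *)
Require Import Defs.
From Stdlib Require Import Reals Lra Psatz Classical FunctionalExtensionality.
From Coquelicot Require Import Coquelicot.
Open Scope R_scope.


Lemma dplus (f g : R -> R) x a b : is_derive f x a -> is_derive g x b ->
  is_derive (fun t => f t + g t) x (a + b).
Proof. intros; apply (is_derive_plus f g x a b); auto. Qed.
Lemma dminus (f g : R -> R) x a b : is_derive f x a -> is_derive g x b ->
  is_derive (fun t => f t - g t) x (a - b).
Proof. intros; apply (is_derive_minus f g x a b); auto. Qed.
Lemma dmult (f g : R -> R) x a b : is_derive f x a -> is_derive g x b ->
  is_derive (fun t => f t * g t) x (a * g x + f x * b).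
Proof. intros; apply (is_derive_mult f g x a b); auto. intros; apply Rmult_comm. Qed.
Lemma dconst (c x : R) : is_derive (fun _ => c) x 0.
Proof. apply (is_derive_const c x). Qed.
Lemma did (x : R) : is_derive (fun t => t) x 1.
Proof. apply (is_derive_id x). Qed.
Lemma deq (f : R -> R) (x a b : R) : is_derive f x a -> @eq R a b -> is_derive f x b.
Proof. intros H ->; exact H. Qed.
Lemma dscal (c x : R) : is_derive (Rmult c) x (0 * x + c * 1).
Proof. apply (dmult (fun _ => c) (fun t => t)); [apply dconst | apply did]. Qed.
Ltac dtac := repeat match goal with
 | |- is_derive (fun t => _ + _) _ _ => apply dplus
 | |- is_derive (fun t => _ - _) _ _ => apply dminus
 | |- is_derive (fun t => _ * _) _ _ => apply dmult
 | |- is_derive (fun t => t) _ _ => apply did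
 | |- is_derive (Rmult _) _ _ => apply dscal
 | |- is_derive (fun t => ?c) _ _ => apply dconst
 | |- is_derive _ _ _ => eassumption
 end.

Lemma cplus (f g : R -> R) x : continuous f x -> continuous g x -> continuous (fun t => f t + g t) x.
Proof. intros; apply (continuous_plus f g x); auto. Qed.
Lemma cminus (f g : R -> R) x : continuous f x -> continuous g x -> continuous (fun t => f t - g t) x.
Proof. intros; apply (continuous_plus f (fun t => opp (g t)) x); auto. apply (continuous_opp g x); auto. Qed.
Lemma cmult (f g : R -> R) x : continuous f x -> continuous g x -> continuous (fun t => f t * g t) x.
Proof. intros; apply (continuous_mult f g x); auto. Qed.
Lemma cconst (c x : R) : continuous (fun _ => c) x.
Proof. apply continuous_const. Qed.
Lemma cid (x : R) : continuous (fun t => t) x.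
Proof. apply continuous_id. Qed.
Lemma cscal (c x : R) : continuous (Rmult c) x.
Proof. apply (cmult (fun _ => c) (fun t => t)); [apply cconst | apply cid]. Qed.
Ltac ctac := repeat match goal with
 | |- continuous (fun t => _ + _) _ => apply cplus
 | |- continuous (fun t => _ - _) _ => apply cminus
 | |- continuous (fun t => _ * _) _ => apply cmult
 | |- continuous (fun t => t) _ => apply cid
 | |- continuous (Rmult _) _ => apply cscal
 | |- continuous (fun t => ?c) _ => apply cconst
 | |- continuous _ _ => eassumption
 end.

Lemma test (u u1 : R -> R) z : is_derive u z (u1 z) -> continuous u1 z -> continuous u z ->
  is_derive (fun t => t * (u t * u t) / 2 - 3 * u t) z (/2 * (u z * u z) + z * u z * u1 z - 3 * u1 z)
  /\ continuous (fun t => u1 t * u t - 2 * t) z.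
Proof. intros. split. eapply deq. unfold Rdiv. dtac. cbv beta; field. ctac. Qed.

Lemma deriv_fst (f : R -> C) x l : is_derive f x l -> is_derive (fun t => fst (f t)) x (fst l).
Proof. intros H. unfold is_derive in *. apply (filterdiff_comp f fst _ fst H). apply filterdiff_linear, is_linear_fst. Qed.
Lemma deriv_snd (f : R -> C) x l : is_derive f x l -> is_derive (fun t => snd (f t)) x (snd l).
Proof. intros H. unfold is_derive in *. apply (filterdiff_comp f snd _ snd H). apply filterdiff_linear, is_linear_snd. Qed.
Lemma lim_fst {F} {FF : Filter F} (f : R -> C) l : filterlim f F (locally l) -> filterlim (fun t => fst (f t)) F (locally (fst l)).
Proof. intros H. eapply filterlim_comp. exact H. destruct l as [a b]. apply (continuous_fst a b). Qed.
Lemma lim_snd {F} {FF : Filter F} (f : R -> C) l : filterlim f F (locally l) -> filterlim (fun t => snd (f t)) F (locally (snd l)).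
Proof. intros H. eapply filterlim_comp. exact H. destruct l as [a b]. apply (continuous_snd a b). Qed.


Lemma eps_eq (x y : R) : (forall e, 0 < e -> Rabs (x - y) < e) -> x = y.
Proof. intros H. destruct (Req_dec x y) as [|Hn]; auto. exfalso.
  assert (Hp : 0 < Rabs (x-y)) by (apply Rabs_pos_lt; lra).
  specialize (H _ Hp); lra. Qed.

Lemma rlim_eps (H : R->R) L : filterlim H (at_right 0) (locally L) ->
  forall e, 0<e -> exists d, 0<d /\ forall y, 0<y<d -> Rabs (H y - L) < e.
Proof.
  intros Hl e he. assert (Hb: locally L (fun x => Rabs (x - L) < e)).
  { exists (mkposreal e he). intros y Hy. exact Hy. }
  destruct (Hl _ Hb) as [d Hd]. exists d; split. apply cond_pos.
  intros y [Hy1 Hy2]. apply Hd; [| exact Hy1].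
  change (Rabs (y - 0) < d). rewrite Rabs_pos_eq; lra.
Qed.
Lemma llim_eps (H : R->R) L : filterlim H (at_left 0) (locally L) ->
  forall e, 0<e -> exists d, 0<d /\ forall y, -d<y<0 -> Rabs (H y - L) < e.
Proof.
  intros Hl e he. assert (Hb: locally L (fun x => Rabs (x - L) < e)).
  { exists (mkposreal e he). intros y Hy. exact Hy. }
  destruct (Hl _ Hb) as [d Hd]. exists d; split. apply cond_pos.
  intros y [Hy1 Hy2]. apply Hd; [| exact Hy2].
  change (Rabs (y - 0) < d). rewrite Rabs_left; lra.
Qed.
Lemma cont_eps (H : R->R) x : continuous H x ->
  forall e, 0<e -> exists d, 0<d /\ forall y, Rabs (y - x) < d -> Rabs (H y - H x) < e.
Proof.
  intros Hl e he. assert (Hb: locally (H x) (fun z => Rabs (z - H x) < e)).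
  { exists (mkposreal e he). intros y Hy. exact Hy. }
  destruct (Hl _ Hb) as [d Hd]. exists d; split. apply cond_pos.
  intros y Hy. apply Hd. exact Hy.
Qed.

Lemma flim_eq {T} {F : (T->Prop)->Prop} (f : T->R) (a b : R) :
  filterlim f F (locally a) -> @eq R a b -> filterlim f F (locally b).
Proof. intros H ->; auto. Qed.
Lemma flim_plus {T} {F : (T->Prop)->Prop} {FF: Filter F} (f g : T->R) a b :
  filterlim f F (locally a) -> filterlim g F (locally b) -> filterlim (fun x => f x + g x) F (locally (a+b)).
Proof. intros. eapply filterlim_comp_2; eauto. apply (filterlim_plus a b). Qed.
Lemma flim_mult {T} {F : (T->Prop)->Prop} {FF: Filter F} (f g : T->R) a b :
  filterlim f F (locally a) -> filterlim g F (locally b) -> filterlim (fun x => f x * g x) F (locally (a*b)).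
Proof. intros. eapply filterlim_comp_2; eauto. apply (filterlim_mult a b). Qed.
Lemma flim_const {T} {F : (T->Prop)->Prop} {FF: Filter F} (c : R) :
  filterlim (fun _ : T => c) F (locally c).
Proof. apply filterlim_const. Qed.
Lemma flim_minus {T} {F : (T->Prop)->Prop} {FF: Filter F} (f g : T->R) a b :
  filterlim f F (locally a) -> filterlim g F (locally b) -> filterlim (fun x => f x - g x) F (locally (a-b)).
Proof. intros.
  apply (filterlim_ext (fun x => f x + (-1) * g x)). intros x; change (f x + (-1) * g x = f x - g x); ring.
  apply flim_eq with (a + (-1) * b); [|change (a + (-1) * b = a - b); ring]. apply flim_plus; auto.
  apply flim_mult; auto. apply flim_const.
Qed.
Lemma cont_right (f: R->R) x : continuous f x -> filterlim f (at_right x) (locally (f x)).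
Proof. intros H P HP. destruct (H P HP) as [d Hd]. exists d. intros; apply Hd; auto. Qed.
Lemma cont_left (f: R->R) x : continuous f x -> filterlim f (at_left x) (locally (f x)).
Proof. intros H P HP. destruct (H P HP) as [d Hd]. exists d. intros; apply Hd; auto. Qed.

Lemma exC1 (f:R->R) a b c : a <= b <= c -> ex_RInt f a c -> ex_RInt f a b.
Proof. apply (ex_RInt_Chasles_1 (V:=R_CompleteNormedModule)). Qed.
Lemma exC2 (f:R->R) a b c : a <= b <= c -> ex_RInt f a c -> ex_RInt f b c.
Proof. apply (ex_RInt_Chasles_2 (V:=R_CompleteNormedModule)). Qed.
Lemma RChas (f:R->R) a b c : ex_RInt f a b -> ex_RInt f b c -> RInt f a b + RInt f b c = RInt f a c.
Proof. apply (RInt_Chasles (V:=R_CompleteNormedModule)). Qed.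
Lemma RIuniq (f:R->R) a b l : is_RInt f a b l -> RInt f a b = l.
Proof. apply (is_RInt_unique (V:=R_CompleteNormedModule)). Qed.
Lemma exswap (f:R->R) a b : ex_RInt f a b -> ex_RInt f b a.
Proof. apply (ex_RInt_swap (V:=R_NormedModule)). Qed.

Lemma FTC (H H' : R -> R) a b : a <= b ->
  (forall x, a<=x<=b -> is_derive H x (H' x)) -> (forall x, a<=x<=b -> continuous H' x) ->
  ex_RInt H' a b /\ RInt H' a b = H b - H a.
Proof. intros Hab Hd Hc.
  assert (Hi: is_RInt H' a b (minus (H b) (H a))).
  { apply (is_RInt_derive (V := R_CompleteNormedModule) H H'); intros x Hx; rewrite Rmin_left, Rmax_right in Hx by lra; auto. }
  split. eexists; eauto. rewrite (is_RInt_unique (V := R_CompleteNormedModule) H' a b _ Hi). reflexivity. Qed.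

Lemma mvt (H H' : R -> R) a b : a <= b ->
  (forall x, a<=x<=b -> is_derive H x (H' x)) ->
  exists c, a <= c <= b /\ H b - H a = H' c * (b - a).
Proof. intros Hab Hd. assert (Hm := MVT_gen H a b H'). cbv zeta in Hm.
  rewrite Rmin_left, Rmax_right in Hm by lra. apply Hm.
  intros; apply Hd; lra.
  intros x Hx. apply continuity_pt_filterlim. apply (ex_derive_continuous H x).
  eexists; apply Hd; lra. Qed.

Lemma mono (H H' : R -> R) a b : a <= b ->
  (forall x, a<=x<=b -> is_derive H x (H' x)) -> (forall x, a<=x<=b -> 0 <= H' x) -> H a <= H b.
Proof. intros Hab Hd Hp. destruct (mvt H H' a b Hab Hd) as [c [Hc E]].
  specialize (Hp c Hc). nra. Qed.
Lemma const0 (H H' : R -> R) a b : a <= b ->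
  (forall x, a<=x<=b -> is_derive H x (H' x)) -> (forall x, a<=x<=b -> H' x = 0) -> H a = H b.
Proof. intros Hab Hd Hp. destruct (mvt H H' a b Hab Hd) as [c [Hc E]].
  rewrite (Hp c Hc) in E. lra. Qed.

Lemma jumpFTC (H H' : R -> R) (Lp Lm R0 : R) :
  0 < R0 ->
  (forall z, z <> 0 -> is_derive H z (H' z)) ->
  (forall z, z <> 0 -> continuous H' z) ->
  ex_RInt H' (-R0) R0 ->
  (exists d0 K, 0 < d0 /\ forall t, Rabs t < d0 -> Rabs (H' t) <= K) ->
  filterlim H (at_right 0) (locally Lp) ->
  filterlim H (at_left 0) (locally Lm) ->
  RInt H' (-R0) R0 = H R0 - H (-R0) - (Lp - Lm).
Proof.
  intros HR Hd Hc Hi [d0 [K [Hd0 HK]]] Hp Hm.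
  apply eps_eq. intros e He.
  destruct (rlim_eps H Lp Hp (e/3)) as [d1 [Hd1 H1]]; [lra|].
  destruct (llim_eps H Lm Hm (e/3)) as [d2 [Hd2 H2]]; [lra|].
  set (K' := Rabs K + 1).
  assert (HK' : 0 < K') by (unfold K'; pose proof (Rabs_pos K); lra).
  set (d := Rmin (Rmin d1 d2) (Rmin d0 (Rmin R0 (e / (6 * K')))) / 2).
  assert (Hdpos : 0 < d).
  { unfold d. apply Rdiv_lt_0_compat; [|lra]. repeat apply Rmin_glb_lt; try lra. apply Rdiv_lt_0_compat; lra. }
  assert (Hdle : 2 * d <= Rmin (Rmin d1 d2) (Rmin d0 (Rmin R0 (e / (6 * K'))))) by (unfold d; lra).
  assert (A1 : d < d1) by (pose proof (Rmin_l (Rmin d1 d2) (Rmin d0 (Rmin R0 (e / (6 * K'))))); pose proof (Rmin_l d1 d2); lra).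
  assert (A2 : d < d2) by (pose proof (Rmin_l (Rmin d1 d2) (Rmin d0 (Rmin R0 (e / (6 * K'))))); pose proof (Rmin_r d1 d2); lra).
  assert (A3 : d < d0) by (pose proof (Rmin_r (Rmin d1 d2) (Rmin d0 (Rmin R0 (e / (6 * K'))))); pose proof (Rmin_l d0 (Rmin R0 (e / (6 * K')))); lra).
  assert (A4 : d < R0) by (pose proof (Rmin_r (Rmin d1 d2) (Rmin d0 (Rmin R0 (e / (6 * K'))))); pose proof (Rmin_r d0 (Rmin R0 (e / (6 * K')))); pose proof (Rmin_l R0 (e / (6 * K'))); lra).
  assert (A5 : 2 * d <= e / (6 * K')) by (pose proof (Rmin_r (Rmin d1 d2) (Rmin d0 (Rmin R0 (e / (6 * K'))))); pose proof (Rmin_r d0 (Rmin R0 (e / (6 * K')))); pose proof (Rmin_r R0 (e / (6 * K'))); lra).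
  destruct (FTC H H' d R0) as [Ei1 E1]; [lra| intros; apply Hd; lra | intros; apply Hc; lra |].
  destruct (FTC H H' (-R0) (-d)) as [Ei2 E2]; [lra| intros; apply Hd; lra | intros; apply Hc; lra |].
  assert (Ei3 : ex_RInt H' (-d) d).
  { apply (exC1 _ _ _ R0); [lra|]. apply (exC2 _ (-R0)); [lra|auto]. }
  assert (Ei4 : ex_RInt H' (-d) R0) by (apply (exC2 _ (-R0)); [lra|auto]).
  assert (C1 := RChas H' (-R0) (-d) R0 Ei2 Ei4).
  assert (C2 := RChas H' (-d) d R0 Ei3 Ei1).
  assert (B := abs_RInt_le_const H' (-d) d K').
  assert (B' : Rabs (RInt H' (-d) d) <= (d - - d) * K').
  { apply B; [lra|auto|]. intros t Ht. apply Rle_trans with K; [|unfold K'; pose proof (Rle_abs K); lra].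
    apply HK. apply Rabs_def1; lra. }
  assert (Hb1 := H1 d (conj Hdpos A1)).
  assert (Hb2 := H2 (-d) (conj (Ropp_lt_contravar _ _ A2) (Ropp_lt_gt_0_contravar _ Hdpos))).
  assert (Hsmall : (d - - d) * K' <= e/3).
  { replace (d - - d) with (2 * d) by ring.
    apply Rle_trans with (e / (6 * K') * K'). apply Rmult_le_compat_r; lra.
    assert (e / (6 * K') * K' = e / 6) by (field; lra). lra. }
  rewrite <- C1, <- C2, E1, E2.
  apply Rabs_def2 in Hb1. apply Rabs_def2 in Hb2. apply Rabs_le_between in B'.
  apply Rabs_def1; lra.
Qed.


Lemma gen_key (f : R -> R) D : is_RInt_gen f (Rbar_locally m_infty) (Rbar_locally p_infty) D ->
  forall e, 0 < e -> exists S, forall a b, a < - S -> S < b -> exists y, is_RInt f a b y /\ Rabs (y - D) < e.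
Proof.
  intros HI e he.
  assert (Hb : locally D (fun y => Rabs (y - D) < e)).
  { exists (mkposreal e he). intros y Hy. exact Hy. }
  specialize (HI _ Hb). destruct HI as [Q Rr [M1 HQ] [M2 HR] Himp].
  exists (Rabs M1 + Rabs M2). intros a b Ha Hb'.
  apply (Himp a b).
  - apply HQ. pose proof (Rle_abs (-M1)). rewrite Rabs_Ropp in H. pose proof (Rabs_pos M2). lra.
  - apply HR. pose proof (Rle_abs M2). pose proof (Rabs_pos M1). lra.
Qed.

Lemma gen_facts (f : R -> R) D : is_RInt_gen f (Rbar_locally m_infty) (Rbar_locally p_infty) D ->
  (forall a b, ex_RInt f a b) /\
  (forall e, 0<e -> exists S, forall s, S <= s -> Rabs (RInt f (-s) s - D) < e).
Proof.
  intros HI. split.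
  - intros a b. destruct (gen_key f D HI 1 Rlt_0_1) as [S HS].
    set (s := Rabs S + Rabs a + Rabs b + 1).
    pose proof (Rle_abs S). pose proof (Rle_abs a). pose proof (Rle_abs b). pose proof (Rabs_pos S). pose proof (Rabs_pos a). pose proof (Rabs_pos b).
    destruct (HS (-s) s) as [y [Hy _]]. unfold s; lra. unfold s; lra.
    assert (He : ex_RInt f (-s) s) by (exists y; exact Hy).
    assert (Hab : forall x y, Rabs x <= Rabs S + Rabs a + Rabs b -> Rabs y <= Rabs S + Rabs a + Rabs b -> x <= y -> ex_RInt f x y).
    { intros a' b' Ha' Hb' Hle. pose proof (Rle_abs a'). pose proof (Rle_abs b').
      pose proof (Rle_abs (-a')). pose proof (Rle_abs (-b')). rewrite !Rabs_Ropp in *.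
      apply (exC2 _ (-s)). unfold s; lra. apply (exC1 _ _ _ s). unfold s; lra. exact He. }
    pose proof (Rabs_pos S). pose proof (Rabs_pos a). pose proof (Rabs_pos b).
    destruct (Rle_dec a b) as [Hle|Hle].
    + apply Hab; lra.
    + apply exswap. apply Hab; lra.
  - intros e he. destruct (gen_key f D HI e he) as [S HS]. exists (Rabs S + 1). intros s Hs.
    pose proof (Rle_abs S). pose proof (Rle_abs (-S)). rewrite Rabs_Ropp in *.
    destruct (HS (-s) s) as [y [Hy Hy']]; try lra.
    rewrite (RIuniq _ _ _ _ Hy). exact Hy'.
Qed.

Lemma refl_int (f : R -> R) : (forall a b, ex_RInt f a b) ->
  forall a b, ex_RInt (fun t => f (-t)) a b /\ RInt (fun t => f (-t)) a b = RInt f (-b) (-a).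
Proof.
  intros Hex a b.
  assert (E1 : ex_RInt (fun y => scal (-1) (f (-1 * y + 0))) a b).
  { apply (ex_RInt_comp_lin (V:=R_NormedModule)). apply Hex. }
  assert (E2 : ex_RInt (fun t => f (-t)) a b).
  { apply (ex_RInt_ext (fun y => scal (-1) (scal (-1) (f (-1 * y + 0))))).
    intros x _. change (-1 * (-1 * f (-1 * x + 0)) = f (-x)). replace (-1 * x + 0) with (-x) by ring. ring.
    apply (ex_RInt_scal (V:=R_NormedModule)). exact E1. }
  split; auto.
  assert (C := RInt_comp_lin (V:=R_CompleteNormedModule) f (-1) 0 a b (Hex _ _)).
  assert (C2 : RInt (fun y => scal (-1) (f (-1 * y + 0))) a b = - RInt (fun t => f (-t)) a b).
  { pose proof (RInt_opp (V:=R_CompleteNormedModule) _ a b E2) as O.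
    change (RInt (fun x => - f (-x)) a b = - RInt (fun t => f (-t)) a b) in O. rewrite <- O.
    apply RInt_ext. intros x _. change (-1 * f (-1 * x + 0) = - f (-x)). replace (-1 * x + 0) with (-x) by ring. ring. }
  assert (C3 : - RInt (fun t => f (-t)) a b = RInt f (-1*a+0) (-1*b+0)) by (rewrite <- C2; exact C).
  replace (-1 * a + 0) with (-a) in C3 by ring. replace (-1 * b + 0) with (-b) in C3 by ring.
  pose proof (opp_RInt_swap (V:=R_CompleteNormedModule) f (-b) (-a) (Hex _ _)) as O.
  change (- RInt f (-b) (-a) = RInt f (-a) (-b)) in O. lra.
Qed.

Lemma RIplus (f g : R -> R) a b : ex_RInt f a b -> ex_RInt g a b ->
  RInt (fun t => f t + g t) a b = RInt f a b + RInt g a b.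
Proof. intros. apply (RInt_plus (V:=R_CompleteNormedModule)); auto. Qed.
Lemma RIconst (c a b : R) : RInt (fun _ => c) a b = (b - a) * c.
Proof. rewrite RInt_const. reflexivity. Qed.
Lemma exconst (c a b : R) : ex_RInt (fun _ => c) a b.
Proof. apply (ex_RInt_const (V:=R_NormedModule)). Qed.

Lemma good (f : R -> R) D : (forall x, 0 <= f x) -> (forall a b, ex_RInt f a b) ->
  (forall e, 0<e -> exists S, forall s, S <= s -> Rabs (RInt f (-s) s - D) < e) ->
  forall e, 0 < e -> forall R0, exists R, R0 <= R /\ 1 <= R /\ R * (f R + f (-R)) < e.
Proof.
  intros Hpos Hex HL e he R0.
  destruct (HL (e/4)) as [S HS]; [lra|].
  set (R1 := Rmax (Rmax R0 S) 1).
  assert (HR1a : R0 <= R1) by (unfold R1; pose proof (Rmax_l (Rmax R0 S) 1); pose proof (Rmax_l R0 S); lra).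
  assert (HR1b : S <= R1) by (unfold R1; pose proof (Rmax_l (Rmax R0 S) 1); pose proof (Rmax_r R0 S); lra).
  assert (HR1c : 1 <= R1) by (unfold R1; apply Rmax_r).
  apply NNPP. intros Hn.
  assert (Hall : forall R, R1 <= R -> e <= R * (f R + f (-R))).
  { intros R HR. apply Rnot_lt_le. intros Hlt. apply Hn. exists R. repeat split; lra. }
  destruct (refl_int f Hex R1 (2*R1)) as [Er Rr].
  assert (Eg : ex_RInt (fun t => f t + f (-t)) R1 (2*R1)).
  { apply (ex_RInt_plus (V:=R_NormedModule)); auto. }
  assert (Hlow : RInt (fun _ => e / (2*R1)) R1 (2*R1) <= RInt (fun t => f t + f (-t)) R1 (2*R1)).
  { apply RInt_le; [lra| apply exconst | exact Eg |].
    intros t Ht. assert (Ht2 := Hall t ltac:(lra)).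
    pose proof (Hpos t). pose proof (Hpos (-t)).
    assert (e <= 2 * R1 * (f t + f (-t))) by nra.
    apply Rnot_lt_le. intros Hc.
    assert (e / (2 * R1) * (2 * R1) = e) by (field; lra). nra. }
  rewrite RIconst, RIplus in Hlow by auto.
  rewrite Rr in Hlow.
  assert (Q1 : RInt f (-(2*R1)) (2*R1) = RInt f (-(2*R1)) (-R1) + RInt f (-R1) R1 + RInt f R1 (2*R1)).
  { pose proof (RChas f (-R1) R1 (2*R1) (Hex _ _) (Hex _ _)).
    pose proof (RChas f (-(2*R1)) (-R1) (2*R1) (Hex _ _) (Hex _ _)). lra. }
  assert (A1 := HS (2*R1) ltac:(lra)). assert (A2 := HS R1 ltac:(lra)).
  apply Rabs_def2 in A1. apply Rabs_def2 in A2.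
  assert (((2 * R1 - R1) * (e / (2 * R1))) = e/2) by (field; lra).
  lra.
Qed.


Lemma dexp (s t : R) : is_derive (fun x => exp (2*s*x)) t (2*s*exp(2*s*t)).
Proof. auto_derive; auto; ring. Qed.

Lemma halfline (u v u1 v1 u2 v2 : R -> R) (k h B : R) :
  0 < h ->
  (forall z, 0<z -> is_derive u z (u1 z)) -> (forall z, 0<z -> is_derive v z (v1 z)) ->
  (forall z, 0<z -> is_derive u1 z (u2 z)) -> (forall z, 0<z -> is_derive v1 z (v2 z)) ->
  (forall z, 0<z -> u2 z = k * u z + h/2 * v z + h*z*v1 z) ->
  (forall z, 0<z -> v2 z = k * v z - h/2 * u z - h*z*u1 z) ->
  (forall z, 0<z -> v1 z * u z - u1 z * v z + h/2*z*(u z*u z+v z*v z) = 0) ->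
  (forall a b, 0<a -> a <= b -> ex_RInt (fun t => u1 t*u1 t+v1 t*v1 t) a b /\
       RInt (fun t => u1 t*u1 t+v1 t*v1 t) a b <= B) ->
  forall z, 0<z -> u z*u z + v z*v z = 0.
Proof.
  intros Hh Du Dv Du1 Dv1 Ou Ov G0 HB z1 Hz1.
  set (q := fun t => u t*u t + v t*v t).
  set (f := fun t => u1 t*u1 t + v1 t*v1 t).
  set (E := fun t => u1 t*u1 t + v1 t*v1 t - k * (u t*u t + v t*v t)).
  assert (qpos : forall t, 0 <= q t) by (intros; unfold q; nra).
  assert (fpos : forall t, 0 <= f t) by (intros; unfold f; nra).
  assert (Lag : forall t, (u1 t * v t - v1 t * u t)^2 + (u t * u1 t + v t * v1 t)^2 = f t * q t)
    by (intros; unfold f, q; ring).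
  assert (F1 : forall t, 0 < t -> h*h*t*t/4 * q t <= f t).
  { intros t Ht. assert (X : u1 t * v t - v1 t * u t = h/2*t*q t) by (unfold q; cbv beta; specialize (G0 t Ht); lra).
    pose proof (Lag t) as L. rewrite X in L. pose proof (qpos t). pose proof (fpos t).
    apply Rnot_lt_le. intros Hc. destruct (Req_dec (q t) 0) as [Hq0|Hq0].
    { rewrite Hq0 in Hc. lra. }
    assert (0 < q t) by lra.
    assert (f t * q t < h*h*t*t/4*q t * q t) by (apply Rmult_lt_compat_r; lra).
    assert ((h/2*t*q t)^2 = h*h*t*t/4*q t*q t) by field.
    pose proof (pow2_ge_0 (u t * u1 t + v t * v1 t)). lra. }
  assert (DE : forall t, 0 < t -> is_derive E t (h*h/2*t*q t)).
  { intros t Ht. specialize (Du t Ht). specialize (Dv t Ht). specialize (Du1 t Ht). specialize (Dv1 t Ht).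
    unfold E. eapply deq. dtac. cbv beta. rewrite (Ou t Ht), (Ov t Ht).
    specialize (G0 t Ht). unfold q. nra. }
  assert (F3 : forall t, 0 < t -> E t <= 0).
  { intros t2 Ht2. apply Rnot_lt_le. intros HE2.
    set (E2 := E t2).
    set (Z := t2 + 2*(Rabs k + 1)/h).
    assert (HZ : t2 <= Z) by (unfold Z; pose proof (Rabs_pos k); assert (0 < 2*(Rabs k+1)/h) by (apply Rdiv_lt_0_compat; lra); lra).
    assert (Hf : forall y, Z <= y -> E2/2 <= f y).
    { intros y Hy.
      assert (Hm : E t2 <= E y).
      { apply (mono E (fun t => h*h/2*t*q t)). lra. intros x Hx; apply DE; lra.
        intros x Hx. pose proof (qpos x). assert (0 <= h*h/2*x) by (apply Rmult_le_pos; [nra|lra]). nra. }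
      assert (hy : 2*(Rabs k+1) <= h*y).
      { assert (h * Z = h*t2 + 2*(Rabs k+1)) by (unfold Z; field; lra). nra. }
      assert (c1 : (Rabs k + 1) <= h*h*y*y/4) by (pose proof (Rabs_pos k); nra).
      pose proof (F1 y ltac:(lra)). pose proof (qpos y). pose proof (fpos y).
      assert ((Rabs k + 1) * q y <= f y) by nra.
      assert (- k * q y <= Rabs k * q y) by (pose proof (Rle_abs (-k)); rewrite Rabs_Ropp in *; nra).
      assert (Ey : E y = f y - k * q y) by reflexivity. unfold E2. lra. }
    set (T := 2*(Rabs B + 1)/E2).
    assert (HT : 0 < T) by (unfold T; apply Rdiv_lt_0_compat; [pose proof (Rabs_pos B); lra| exact HE2]).
    destruct (HB Z (Z+T)) as [Hex HBd]; [lra|lra|].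
    assert (Hl : RInt (fun _ => E2/2) Z (Z+T) <= RInt f Z (Z+T)).
    { apply RInt_le; [lra|apply exconst|exact Hex|]. intros; apply Hf; lra. }
    rewrite RIconst in Hl. assert ((Z + T - Z) * (E2/2) = Rabs B + 1) by (unfold T; field; apply Rgt_not_eq; exact HE2).
    pose proof (Rle_abs B). unfold f in Hl. lra. }
  assert (F4 : forall t, 0 < t -> f t <= k * q t).
  { intros t Ht. specialize (F3 t Ht). unfold E in F3. unfold f, q. lra. }
  destruct (Req_dec (q z1) 0) as [Hq|Hq]; [exact Hq|exfalso].
  assert (Hq1 : 0 < q z1) by (pose proof (qpos z1); lra).
  assert (Hk : 0 <= k) by (pose proof (F4 z1 Hz1); pose proof (fpos z1); nra).
  set (s := sqrt k). assert (Hs : 0 <= s) by apply sqrt_pos.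
  assert (Hs2 : s * s = k) by (apply sqrt_sqrt; exact Hk).
  set (phi := fun t => (u t*u t + v t*v t) * exp (2*s*t)).
  set (phi' := fun t => (u1 t * u t + u t * u1 t + (v1 t * v t + v t * v1 t)) * exp (2*s*t) + (u t*u t + v t*v t) * (2*s*exp(2*s*t))).
  assert (Dphi : forall t, 0 < t -> is_derive phi t (phi' t)).
  { intros t Ht. specialize (Du t Ht). specialize (Dv t Ht). pose proof (dexp s t).
    unfold phi, phi'. eapply deq. dtac. cbv beta. ring. }
  assert (Pphi : forall t, 0 < t -> 0 <= phi' t).
  { intros t Ht. unfold phi'. pose proof (exp_pos (2*s*t)).
    pose proof (Lag t). pose proof (F4 t Ht). pose proof (qpos t). pose proof (fpos t).
    fold (q t). set (Y := u t * u1 t + v t * v1 t) in *.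
    assert (Y*Y <= (s*q t)*(s*q t)).
    { assert (Y^2 <= f t * q t) by (pose proof (pow2_ge_0 (u1 t * v t - v1 t * u t)); lra).
      assert (f t * q t <= k * q t * q t) by (apply Rmult_le_compat_r; lra).
      assert (Hsq : (s*q t)*(s*q t) = k * q t * q t) by (rewrite <- Hs2; ring).
      assert (Y^2 = Y*Y) by ring. lra. }
    assert (0 <= Y + s * q t).
    { apply Rnot_lt_le. intros Hc. assert (0 <= s * q t) by nra. nra. }
    replace (u1 t * u t + u t * u1 t + (v1 t * v t + v t * v1 t)) with (2*Y) by (unfold Y; ring).
    nra. }
  set (W := z1 + 2*(s+1)/h).
  assert (HW : z1 <= W) by (unfold W; assert (0 < 2*(s+1)/h) by (apply Rdiv_lt_0_compat; lra); lra).
  assert (Hmon : phi z1 <= phi W).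
  { apply (mono phi phi'). lra. intros; apply Dphi; lra. intros; apply Pphi; lra. }
  assert (hW : 2*(s+1) <= h*W) by (assert (h * W = h*z1 + 2*(s+1)) by (unfold W; field; lra); nra).
  assert (c1 : k < h*h*W*W/4) by nra.
  pose proof (F1 W ltac:(lra)). pose proof (F4 W ltac:(lra)). pose proof (qpos W).
  assert (q W = 0) by nra.
  unfold phi in Hmon. fold (q z1) in Hmon. fold (q W) in Hmon.
  rewrite H2 in Hmon. pose proof (exp_pos (2*s*z1)). nra.
Qed.

Lemma refl_deriv (g g' : R -> R) z : is_derive g (-z) (g' (-z)) -> is_derive (fun t => g (-t)) z (- g' (-z)).
Proof. intros H. eapply deq. apply (is_derive_comp g Ropp z (g' (-z)) (-1)). exact H.
  eapply deq. apply (is_derive_opp (fun t => t) z 1). apply did. reflexivity.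
  change (-1 * g' (-z) = - g' (-z)). ring. Qed.
Lemma refl_deriv2 (g g' : R -> R) z : is_derive g (-z) (g' (-z)) -> is_derive (fun t => - g (-t)) z (g' (-z)).
Proof. intros H. eapply deq. apply (is_derive_opp (fun t => g (-t)) z). apply refl_deriv. exact H.
  change (- - g' (-z) = g' (-z)). ring. Qed.


Lemma cmod_sq (x : C) : Cmod x ^ 2 = fst x * fst x + snd x * snd x.
Proof. unfold Cmod. rewrite pow2_sqrt. ring. nra. Qed.

Lemma rpow_lem (x p : R) : 0 <= x -> rpow x (p - 1) * (x * x) = rpow x (p + 1).
Proof. intros Hx. unfold rpow. destruct (Rle_dec x 0) as [H|H]. ring.
  replace (p + 1) with ((p - 1) + INR 2) by (simpl; ring).
  rewrite Rpower_plus, Rpower_pow by lra. simpl. ring. Qed.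

Lemma cs (x1 x2 y1 y2 a b : R) : 0 <= a -> 0 <= b -> x1*x1+x2*x2 <= a*a -> y1*y1+y2*y2 <= b*b ->
  Rabs (x1*y1 + x2*y2) <= a*b.
Proof. intros Ha Hb H1 H2.
  assert (L : (x1*y1+x2*y2)^2 + (x1*y2 - x2*y1)^2 = (x1*x1+x2*x2)*(y1*y1+y2*y2)) by ring.
  assert (H3 : (x1*x1+x2*x2)*(y1*y1+y2*y2) <= (a*a)*(b*b)) by (apply Rmult_le_compat; nra).
  assert (H4 : 0 <= a*b) by nra.
  assert (Q : (x1*y1+x2*y2)*(x1*y1+x2*y2) <= (a*b)*(a*b)) by (pose proof (pow2_ge_0 (x1*y2 - x2*y1)); nra).
  revert Q H4. generalize (x1*y1+x2*y2) (a*b). intros X Y Q HY.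
  apply Rabs_le. split; apply Rnot_lt_le; intro Hc; nra. Qed.

Lemma bound0 (g : R -> R) a b : filterlim g (at_right 0) (locally a) -> filterlim g (at_left 0) (locally b) ->
  exists d K, 0 < d /\ 0 <= K /\ forall t, Rabs t < d -> Rabs (g t) <= K.
Proof. intros Ha Hb.
  destruct (rlim_eps g a Ha 1 Rlt_0_1) as [d1 [Hd1 H1]].
  destruct (llim_eps g b Hb 1 Rlt_0_1) as [d2 [Hd2 H2]].
  exists (Rmin d1 d2), (Rabs a + Rabs b + Rabs (g 0) + 1).
  pose proof (Rabs_pos a); pose proof (Rabs_pos b); pose proof (Rabs_pos (g 0)).
  split. apply Rmin_glb_lt; auto. split. lra.
  intros t Ht. pose proof (Rmin_l d1 d2). pose proof (Rmin_r d1 d2).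
  destruct (Rtotal_order t 0) as [Hn|[Hz|Hpp]].
  - rewrite Rabs_left in Ht by lra. specialize (H2 t ltac:(lra)).
    pose proof (Rabs_triang_inv (g t) b). lra.
  - subst. lra.
  - rewrite Rabs_pos_eq in Ht by lra. specialize (H1 t ltac:(lra)).
    pose proof (Rabs_triang_inv (g t) a). lra.
Qed.

Lemma rid : filterlim (fun t : R => t) (at_right 0) (locally 0).
Proof. apply (cont_right (fun t => t)). apply cid. Qed.
Lemma lid : filterlim (fun t : R => t) (at_left 0) (locally 0).
Proof. apply (cont_left (fun t => t)). apply cid. Qed.

Ltac ltc := repeat match goal with
 | |- filterlim (fun t => _ + _) _ _ => apply flim_plus
 | |- filterlim (fun t => _ - _) _ _ => apply flim_minus
 | |- filterlim (fun t => _ * _) _ _ => apply flim_mult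
 | |- filterlim (fun t => t) (at_right 0) _ => apply rid
 | |- filterlim (fun t => t) (at_left 0) _ => apply lid
 | |- filterlim (fun t => ?c) _ _ => apply flim_const
 | |- filterlim _ _ _ => eassumption
 end.

Theorem theorem1p2 (p kappa h sigma : R) (eta eta' eta'' : R -> C) (dplus dminus : C) :
  1 < p -> 0 < h -> sigma < 1 ->
  (forall z, z <> 0 -> is_derive eta z (eta' z)) ->
  (forall z, z <> 0 -> is_derive eta' z (eta'' z)) ->
  (forall z, z <> 0 ->
     ((RtoC kappa + Ci * RtoC (h * sigma)) * eta z
      - Ci * RtoC h * (RtoC (/ 2) * eta z + RtoC z * eta' z)
      - eta'' z)%C = RtoC 0) ->
  continuous eta 0 ->
  filterlim eta' (at_right 0) (locally dplus) ->
  filterlim eta' (at_left 0) (locally dminus) ->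
  (dplus - dminus)%C = (- (RtoC (rpow (Cmod (eta 0)) (p - 1)) * eta 0))%C ->
  (exists M, forall z, Cmod (eta z) <= M) ->
  ex_RInt_gen (fun z => (Cmod (eta' z)) ^ 2) (Rbar_locally m_infty) (Rbar_locally p_infty) ->
  (exists z, eta z <> RtoC 0) ->
  0 < sigma /\
  0 = (1 - sigma) * dirichlet eta' - (/ 2 - sigma) * rpow (Cmod (eta 0)) (p + 1) /\
  (sigma = / 2 - / (p - 1) -> energy p eta eta' = 0).
Proof.
  intros Hp Hh Hs Deta Deta' ODE Hc0 Lpl Lmi Jump [M HM] Hgen [z1 Hz1].
  set (u := fun t => fst (eta t)). set (v := fun t => snd (eta t)).
  set (u1 := fun t => fst (eta' t)). set (v1 := fun t => snd (eta' t)).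
  set (u2 := fun t => fst (eta'' t)). set (v2 := fun t => snd (eta'' t)).
  assert (Du : forall z, z <> 0 -> is_derive u z (u1 z)) by (intros; apply deriv_fst; auto).
  assert (Dv : forall z, z <> 0 -> is_derive v z (v1 z)) by (intros; apply deriv_snd; auto).
  assert (Du1 : forall z, z <> 0 -> is_derive u1 z (u2 z)) by (intros; apply deriv_fst; auto).
  assert (Dv1 : forall z, z <> 0 -> is_derive v1 z (v2 z)) by (intros; apply deriv_snd; auto).
  assert (Ou : forall z, z <> 0 -> u2 z = kappa * u z - h*(sigma - /2) * v z + h * z * v1 z).
  { intros z Hz. specialize (ODE z Hz). apply (f_equal fst) in ODE. simpl in ODE.
    unfold u, v, u2, v1. lra. }
  assert (Ov : forall z, z <> 0 -> v2 z = kappa * v z + h*(sigma - /2) * u z - h * z * u1 z).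
  { intros z Hz. specialize (ODE z Hz). apply (f_equal snd) in ODE. simpl in ODE.
    unfold u, v, v2, u1. lra. }
  assert (Cu : forall z, continuous u z).
  { intros z. destruct (Req_dec z 0) as [->|Hz].
    - unfold u. apply (continuous_comp eta fst). exact Hc0. destruct (eta 0); apply continuous_fst.
    - apply (ex_derive_continuous u). eexists; apply Du; auto. }
  assert (Cv : forall z, continuous v z).
  { intros z. destruct (Req_dec z 0) as [->|Hz].
    - unfold v. apply (continuous_comp eta snd). exact Hc0. destruct (eta 0); apply continuous_snd.
    - apply (ex_derive_continuous v). eexists; apply Dv; auto. }
  assert (Cu1 : forall z, z <> 0 -> continuous u1 z).
  { intros z Hz. apply (ex_derive_continuous u1). eexists; apply Du1; auto. }
  assert (Cv1 : forall z, z <> 0 -> continuous v1 z).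
  { intros z Hz. apply (ex_derive_continuous v1). eexists; apply Dv1; auto. }
  assert (Lu1p : filterlim u1 (at_right 0) (locally (fst dplus))) by (apply lim_fst; auto).
  assert (Lv1p : filterlim v1 (at_right 0) (locally (snd dplus))) by (apply lim_snd; auto).
  assert (Lu1m : filterlim u1 (at_left 0) (locally (fst dminus))) by (apply lim_fst; auto).
  assert (Lv1m : filterlim v1 (at_left 0) (locally (snd dminus))) by (apply lim_snd; auto).
  assert (Lup : filterlim u (at_right 0) (locally (u 0))) by (apply cont_right; auto).
  assert (Lvp : filterlim v (at_right 0) (locally (v 0))) by (apply cont_right; auto).
  assert (Lum : filterlim u (at_left 0) (locally (u 0))) by (apply cont_left; auto).
  assert (Lvm : filterlim v (at_left 0) (locally (v 0))) by (apply cont_left; auto).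
  set (r := rpow (Cmod (eta 0)) (p - 1)).
  set (P := rpow (Cmod (eta 0)) (p + 1)).
  assert (J1 : fst dplus - fst dminus = - r * u 0).
  { apply (f_equal fst) in Jump. simpl in Jump. fold r in Jump. unfold u; cbv beta. lra. }
  assert (J2 : snd dplus - snd dminus = - r * v 0).
  { apply (f_equal snd) in Jump. simpl in Jump. fold r in Jump. unfold v; cbv beta. lra. }
  assert (HP : P = r * (u 0 * u 0 + v 0 * v 0)).
  { unfold P, r. rewrite <- rpow_lem by apply Cmod_ge_0. f_equal.
    unfold u, v; cbv beta. rewrite <- cmod_sq. ring. }
  assert (HM0 : 0 <= M) by (pose proof (HM 0); pose proof (Cmod_ge_0 (eta 0)); lra).
  assert (Hq : forall z, u z * u z + v z * v z <= M * M).
  { intros z. unfold u, v. rewrite <- cmod_sq. pose proof (HM z). pose proof (Cmod_ge_0 (eta z)). nra. }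
  set (f := fun t => u1 t * u1 t + v1 t * v1 t).
  assert (fpos : forall t, 0 <= f t) by (intros; unfold f; nra).
  assert (Hext : (fun z => Cmod (eta' z) ^ 2) = f).
  { apply functional_extensionality. intros z. unfold f, u1, v1. apply cmod_sq. }
  rewrite Hext in Hgen. destruct Hgen as [D HD].
  assert (HDir : dirichlet eta' = D).
  { unfold dirichlet. rewrite Hext. apply is_RInt_gen_unique. exact HD. }
  rewrite HDir. unfold energy. rewrite HDir. fold P.
  destruct (gen_facts f D HD) as [Hexf HLf].
  assert (Hgood := good f D fpos Hexf HLf).
  assert (Hh0 : h <> 0) by lra.
  set (F := fun t => /2 * (t * (u1 t * u1 t + v1 t * v1 t)) - (sigma - /2) * (u1 t * u t + v1 t * v t) + kappa * /h * (v1 t * u t - u1 t * v t)).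
  assert (MI : forall R0, 0 < R0 -> (1 - sigma) * RInt f (-R0) R0 = F R0 - F (-R0) - (sigma - /2) * P).
  { intros R0 HR0.
    assert (E1 : RInt (fun t => (1 - sigma) * f t) (-R0) R0 = (1 - sigma) * RInt f (-R0) R0).
    { apply (RInt_scal (V:=R_CompleteNormedModule) f (-R0) R0 (1-sigma)). apply Hexf. }
    rewrite <- E1.
    destruct (bound0 u1 _ _ Lu1p Lu1m) as [d1 [K1 [Hd1 [HK1 B1]]]].
    destruct (bound0 v1 _ _ Lv1p Lv1m) as [d2 [K2 [Hd2 [HK2 B2]]]].
    rewrite (jumpFTC F (fun t => (1 - sigma) * f t)
      (/2 * (0 * (fst dplus * fst dplus + snd dplus * snd dplus)) - (sigma - /2) * (fst dplus * u 0 + snd dplus * v 0) + kappa * /h * (snd dplus * u 0 - fst dplus * v 0))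
      (/2 * (0 * (fst dminus * fst dminus + snd dminus * snd dminus)) - (sigma - /2) * (fst dminus * u 0 + snd dminus * v 0) + kappa * /h * (snd dminus * u 0 - fst dminus * v 0)) R0 HR0).
    - replace (fst dplus) with (fst dminus - r * u 0) by lra.
      replace (snd dplus) with (snd dminus - r * v 0) by lra.
      rewrite HP. field. exact Hh0.
    - intros z Hz. specialize (Du z Hz). specialize (Dv z Hz). specialize (Du1 z Hz). specialize (Dv1 z Hz).
      unfold F, f. eapply deq. dtac. cbv beta. rewrite (Ou z Hz), (Ov z Hz). field. exact Hh0.
    - intros z Hz. unfold f. specialize (Cu1 z Hz). specialize (Cv1 z Hz). specialize (Cu z). specialize (Cv z). ctac.
    - exact (ex_RInt_scal (V:=R_NormedModule) f _ _ (1-sigma) (Hexf _ _)).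
    - exists (Rmin d1 d2), ((1-sigma)*(K1*K1+K2*K2)). split. apply Rmin_glb_lt; auto.
      intros t Ht. pose proof (Rmin_l d1 d2). pose proof (Rmin_r d1 d2).
      assert (X1 := B1 t ltac:(lra)). assert (X2 := B2 t ltac:(lra)).
      apply Rabs_le_between in X1. apply Rabs_le_between in X2.
      assert (u1 t * u1 t <= K1 * K1) by nra. assert (v1 t * v1 t <= K2 * K2) by nra.
      pose proof (fpos t). rewrite Rabs_pos_eq by nra. unfold f. nra.
    - unfold F. eapply flim_eq. ltc. cbv beta. ring.
    - unfold F. eapply flim_eq. ltc. cbv beta. ring.
  }
  assert (cs2 : forall x1 x2 y1 y2 a b, 0 <= a -> 0 <= b -> x1*x1+x2*x2 <= a*a -> y1*y1+y2*y2 <= b*b ->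
     Rabs (x2*y1 - x1*y2) <= a*b).
  { intros x1 x2 y1 y2 a b Ha Hb H1 H2.
    replace (x2*y1 - x1*y2) with (x2*y1 + x1*(-y2)) by ring. apply cs; auto; nra. }
  assert (Tail : forall et, 0 < et -> et <= 1 -> forall R, 1 <= R -> R * (f R + f (-R)) < et * et ->
     Rabs (F R - F (-R)) <= et * (1 + 2 * M * (Rabs (sigma - /2) + Rabs (kappa * /h)))
     /\ Rabs (v1 R * u R - u1 R * v R) <= et * M /\ Rabs (v1 (-R) * u (-R) - u1 (-R) * v (-R)) <= et * M).
  { intros et Het Het1 R HR1 HRg.
    pose proof (fpos R). pose proof (fpos (-R)).
    assert (fR : f R <= et * et) by nra. assert (fm : f (-R) <= et * et) by nra.
    unfold f in fR, fm.
    assert (A1 := cs (u1 R) (v1 R) (u R) (v R) et M ltac:(lra) HM0 fR (Hq R)).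
    assert (A2 := cs (u1 (-R)) (v1 (-R)) (u (-R)) (v (-R)) et M ltac:(lra) HM0 fm (Hq (-R))).
    assert (B1 := cs2 (u1 R) (v1 R) (u R) (v R) et M ltac:(lra) HM0 fR (Hq R)).
    assert (B2 := cs2 (u1 (-R)) (v1 (-R)) (u (-R)) (v (-R)) et M ltac:(lra) HM0 fm (Hq (-R))).
    split; [|split; auto].
    assert (EF : F R - F (-R) = /2 * (R * f R + R * f (-R)) - (sigma - /2) * ((u1 R * u R + v1 R * v R) - (u1 (-R) * u (-R) + v1 (-R) * v (-R)))
       + kappa * /h * ((v1 R * u R - u1 R * v R) - (v1 (-R) * u (-R) - u1 (-R) * v (-R)))) by (unfold F, f; cbv beta; ring).
    rewrite EF.
    apply Rabs_le_between in A1. apply Rabs_le_between in A2. apply Rabs_le_between in B1. apply Rabs_le_between in B2.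
    assert (T1 : Rabs ((sigma - /2) * ((u1 R * u R + v1 R * v R) - (u1 (-R) * u (-R) + v1 (-R) * v (-R)))) <= Rabs (sigma - /2) * (2 * (et * M))).
    { rewrite Rabs_mult. apply Rmult_le_compat_l. apply Rabs_pos. apply Rabs_le. lra. }
    assert (T2 : Rabs (kappa * /h * ((v1 R * u R - u1 R * v R) - (v1 (-R) * u (-R) - u1 (-R) * v (-R)))) <= Rabs (kappa * /h) * (2 * (et * M))).
    { rewrite Rabs_mult. apply Rmult_le_compat_l. apply Rabs_pos. apply Rabs_le. lra. }
    assert (T0 : Rabs (/2 * (R * f R + R * f (-R))) <= et / 2).
    { rewrite Rabs_pos_eq by nra. nra. }
    apply Rabs_le_between in T0. apply Rabs_le_between in T1. apply Rabs_le_between in T2.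
    assert (et * (1 + 2 * M * (Rabs (sigma - /2) + Rabs (kappa * /h))) = et + Rabs (sigma - /2) * (2 * (et * M)) + Rabs (kappa * /h) * (2 * (et * M))) by ring.
    apply Rabs_le. lra. }
  assert (Main : (1 - sigma) * D - (/2 - sigma) * P = 0).
  { apply eps_eq. intros e He.
    set (W := 1 + 2 * M * (Rabs (sigma - /2) + Rabs (kappa * /h))).
    assert (HW : 1 <= W) by (unfold W; pose proof (Rabs_pos (sigma - /2)); pose proof (Rabs_pos (kappa * /h)); nra).
    set (et := Rmin 1 (e / (4*W))).
    assert (Het : 0 < et) by (unfold et; apply Rmin_glb_lt; [lra| apply Rdiv_lt_0_compat; lra]).
    assert (Het1 : et <= 1) by (unfold et; apply Rmin_l).
    assert (HetW : et * W <= e / 4).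
    { assert (et <= e / (4*W)) by (unfold et; apply Rmin_r).
      assert (e / (4*W) * W = e/4) by (field; lra). nra. }
    destruct (HLf (e / (2*(1-sigma)))) as [S HS]. apply Rdiv_lt_0_compat; lra.
    destruct (Hgood (et*et) ltac:(nra) S) as [R [HRS [HR1 HRg]]].
    specialize (HS R HRS). specialize (MI R ltac:(lra)).
    destruct (Tail et Het Het1 R HR1 HRg) as [T _]. fold W in T.
    apply Rabs_def2 in HS. apply Rabs_le_between in T.
    assert ((1 - sigma) * (e / (2*(1-sigma))) = e/2) by (field; lra).
    assert (X1 : (1-sigma) * (RInt f (-R) R - D) < e/2) by nra.
    assert (X2 : -(e/2) < (1-sigma) * (RInt f (-R) R - D)) by nra.
    apply Rabs_def1; nra. }
  set (q := fun t => u t * u t + v t * v t).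
  assert (qpos : forall t, 0 <= q t) by (intros; unfold q; nra).
  assert (Cq : forall t, continuous q t) by (intros t; unfold q; specialize (Cu t); specialize (Cv t); ctac).
  assert (Hexq : forall a b, ex_RInt q a b).
  { intros a b. apply (ex_RInt_continuous (V:=R_CompleteNormedModule)). intros; apply Cq. }
  assert (Hq1 : 0 < q z1).
  { apply Rnot_le_lt. intro Hle. apply Hz1.
    assert (fst (eta z1) = 0 /\ snd (eta z1) = 0) as [E1 E2] by (unfold q, u, v in Hle; cbv beta in Hle; split; nra).
    destruct (eta z1) as [a b]. simpl in E1, E2. subst. reflexivity. }
  set (G := fun t => v1 t * u t - u1 t * v t + h/2 * (t * (u t * u t + v t * v t))).
  set (Lgp := snd dplus * u 0 - fst dplus * v 0 + h/2 * (0 * (u 0 * u 0 + v 0 * v 0))).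
  set (Lgm := snd dminus * u 0 - fst dminus * v 0 + h/2 * (0 * (u 0 * u 0 + v 0 * v 0))).
  assert (Lgpm : Lgp = Lgm).
  { unfold Lgp, Lgm. replace (fst dplus) with (fst dminus - r * u 0) by lra.
    replace (snd dplus) with (snd dminus - r * v 0) by lra. ring. }
  assert (LGp : filterlim G (at_right 0) (locally Lgp)) by (unfold G, Lgp; eapply flim_eq; [ltc|cbv beta; ring]).
  assert (LGm : filterlim G (at_left 0) (locally Lgm)) by (unfold G, Lgm; eapply flim_eq; [ltc|cbv beta; ring]).
  assert (DG : forall z, z <> 0 -> is_derive G z (h * sigma * q z)).
  { intros z Hz. specialize (Du z Hz). specialize (Dv z Hz). specialize (Du1 z Hz). specialize (Dv1 z Hz).
    unfold G, q. eapply deq. dtac. cbv beta. rewrite (Ou z Hz), (Ov z Hz). field. }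
  assert (GI : forall R0, 0 < R0 -> h * sigma * RInt q (-R0) R0 = G R0 - G (-R0)).
  { intros R0 HR0.
    pose proof (RInt_scal (V:=R_CompleteNormedModule) q (-R0) R0 (h*sigma) (Hexq _ _)) as X.
    change (RInt (fun t => h * sigma * q t) (-R0) R0 = h * sigma * RInt q (-R0) R0) in X.
    rewrite <- X.
    rewrite (jumpFTC G (fun t => h * sigma * q t) Lgp Lgm R0 HR0); auto.
    - rewrite Lgpm. ring.
    - intros z Hz. specialize (Cq z). ctac.
    - exact (ex_RInt_scal (V:=R_NormedModule) q _ _ (h*sigma) (Hexq _ _)).
    - destruct (cont_eps q 0 (Cq 0) 1 Rlt_0_1) as [d [Hd Hdd]].
      exists d, (Rabs (h*sigma) * (q 0 + 1)). split; auto. intros t Ht.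
      rewrite Rabs_mult. apply Rmult_le_compat_l. apply Rabs_pos.
      assert (Z := Hdd t ltac:(rewrite Rminus_0_r; exact Ht)). apply Rabs_def2 in Z.
      pose proof (qpos t). rewrite Rabs_pos_eq by lra. lra. }
  assert (Gb : forall R, 0 < R -> v1 R * u R - u1 R * v R <= G R /\ G (-R) <= v1 (-R) * u (-R) - u1 (-R) * v (-R)).
  { intros R HR. pose proof (qpos R) as Q1. pose proof (qpos (-R)) as Q2. unfold q in Q1, Q2. unfold G. cbv beta in *.
    assert (0 <= h/2*(R*(u R * u R + v R * v R))) by (apply Rmult_le_pos; [lra| apply Rmult_le_pos; lra]).
    assert (0 <= h/2*(R*(u (-R) * u (-R) + v (-R) * v (-R)))) by (apply Rmult_le_pos; [lra| apply Rmult_le_pos; lra]).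
    split; nra. }
  assert (IB : forall a b, a <= b -> RInt f a b <= D + 1).
  { intros a b Hab. destruct (HLf 1 Rlt_0_1) as [S HS].
    set (s := Rabs S + Rabs a + Rabs b + 1).
    pose proof (Rle_abs S). pose proof (Rle_abs a). pose proof (Rle_abs b).
    pose proof (Rle_abs (-a)). pose proof (Rle_abs (-b)). rewrite !Rabs_Ropp in *.
    pose proof (Rabs_pos S). pose proof (Rabs_pos a). pose proof (Rabs_pos b).
    specialize (HS s ltac:(unfold s; lra)). apply Rabs_def2 in HS.
    pose proof (RChas f (-s) a s (Hexf _ _) (Hexf _ _)).
    pose proof (RChas f a b s (Hexf _ _) (Hexf _ _)).
    assert (0 <= RInt f (-s) a) by (apply RInt_ge_0; [unfold s; lra|apply Hexf|intros; apply fpos]).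
    assert (0 <= RInt f b s) by (apply RInt_ge_0; [unfold s; lra|apply Hexf|intros; apply fpos]).
    lra. }
  assert (Hsig : 0 < sigma).
  { apply Rnot_le_lt. intros Hsle. destruct (Rle_lt_or_eq_dec _ _ Hsle) as [Hneg|Hzero].
    -
      destruct (cont_eps q z1 (Cq z1) (q z1 / 2)) as [r0 [Hr0 Hr0d]]; [lra|].
      set (rho := r0 / 2).
      assert (Hrho : 0 < rho) by (unfold rho; lra).
      assert (Low : forall R0, Rabs z1 + rho <= R0 -> rho * q z1 <= RInt q (-R0) R0).
      { intros R0 HR0. pose proof (Rle_abs z1). pose proof (Rle_abs (-z1)). rewrite Rabs_Ropp in *.
        pose proof (RChas q (-R0) (z1 - rho) R0 (Hexq _ _) (Hexq _ _)).
        pose proof (RChas q (z1 - rho) (z1 + rho) R0 (Hexq _ _) (Hexq _ _)).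
        assert (0 <= RInt q (-R0) (z1 - rho)) by (apply RInt_ge_0; [lra|apply Hexq|intros; apply qpos]).
        assert (0 <= RInt q (z1 + rho) R0) by (apply RInt_ge_0; [lra|apply Hexq|intros; apply qpos]).
        assert (RInt (fun _ => q z1 / 2) (z1 - rho) (z1 + rho) <= RInt q (z1 - rho) (z1 + rho)).
        { apply RInt_le; [lra|apply exconst|apply Hexq|]. intros x Hx.
          assert (Z := Hr0d x ltac:(apply Rabs_def1; unfold rho in *; lra)). apply Rabs_def2 in Z. lra. }
        rewrite RIconst in H5. lra. }
      set (K := h * (- sigma) * rho * q z1).
      assert (HK : 0 < K) by (unfold K; apply Rmult_lt_0_compat; [apply Rmult_lt_0_compat; [nra|lra]|lra]).
      set (et := Rmin 1 (K / (4 * (M + 1)))).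
      assert (Het : 0 < et) by (unfold et; apply Rmin_glb_lt; [lra|apply Rdiv_lt_0_compat; lra]).
      assert (Het1 : et <= 1) by (unfold et; apply Rmin_l).
      assert (Het2 : et * (4 * (M+1)) <= K).
      { assert (et <= K / (4 * (M+1))) by (unfold et; apply Rmin_r).
        assert (K / (4 * (M + 1)) * (4 * (M+1)) = K) by (field; lra). nra. }
      destruct (Hgood (et*et) ltac:(nra) (Rabs z1 + rho)) as [R [HRS [HR1 HRg]]].
      destruct (Tail et Het Het1 R HR1 HRg) as [_ [T1 T2]].
      apply Rabs_le_between in T1. apply Rabs_le_between in T2.
      destruct (Gb R ltac:(lra)) as [G1 G2].
      specialize (GI R ltac:(lra)). specialize (Low R HRS).
      assert (h * sigma * RInt q (-R) R <= h * sigma * (rho * q z1)).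
      { apply Rmult_le_compat_neg_l; [nra|exact Low]. }
      assert (h * sigma * (rho * q z1) = - K) by (unfold K; ring).
      nra.
    -
      subst sigma.
      assert (Gp : forall z, 0 < z -> G z = Lgp).
      { intros z Hz. apply eps_eq. intros e He.
        destruct (rlim_eps G Lgp LGp e He) as [d [Hd Hdd]].
        set (dl := Rmin d z / 2).
        assert (Hdl1 : 0 < dl) by (unfold dl; apply Rdiv_lt_0_compat; [apply Rmin_glb_lt|]; lra).
        assert (Hdl2 : dl < d) by (unfold dl; pose proof (Rmin_l d z); lra).
        assert (Hdl3 : dl < z) by (unfold dl; pose proof (Rmin_r d z); lra).
        rewrite <- (const0 G (fun t => h * 0 * q t) dl z ltac:(lra)).
        apply Hdd; lra. intros; apply DG; lra. intros; ring. }
      assert (Gm : forall z, z < 0 -> G z = Lgm).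
      { intros z Hz. apply eps_eq. intros e He.
        destruct (llim_eps G Lgm LGm e He) as [d [Hd Hdd]].
        set (dl := Rmin d (-z) / 2).
        assert (Hdl1 : 0 < dl) by (unfold dl; apply Rdiv_lt_0_compat; [apply Rmin_glb_lt|]; lra).
        assert (Hdl2 : dl < d) by (unfold dl; pose proof (Rmin_l d (-z)); lra).
        assert (Hdl3 : dl < -z) by (unfold dl; pose proof (Rmin_r d (-z)); lra).
        rewrite (const0 G (fun t => h * 0 * q t) z (-dl) ltac:(lra)).
        apply Hdd; lra. intros; apply DG; lra. intros; ring. }
      assert (Lg0 : Lgp = 0).
      { apply eps_eq. intros e He.
        set (et := Rmin 1 (e / (2 * (M + 1)))).
        assert (Het : 0 < et) by (unfold et; apply Rmin_glb_lt; [lra|apply Rdiv_lt_0_compat; lra]).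
        assert (Het1 : et <= 1) by (unfold et; apply Rmin_l).
        assert (Het2 : et * (2 * (M+1)) <= e).
        { assert (et <= e / (2 * (M+1))) by (unfold et; apply Rmin_r).
          assert (e / (2 * (M + 1)) * (2 * (M+1)) = e) by (field; lra). nra. }
        destruct (Hgood (et*et) ltac:(nra) 1) as [R [HRS [HR1 HRg]]].
        destruct (Tail et Het Het1 R HR1 HRg) as [_ [T1 T2]].
        apply Rabs_le_between in T1. apply Rabs_le_between in T2.
        destruct (Gb R ltac:(lra)) as [G1 G2].
        rewrite (Gp R ltac:(lra)) in G1. rewrite (Gm (-R) ltac:(lra)), <- Lgpm in G2.
        apply Rabs_def1; nra. }
      assert (G0 : forall z, z <> 0 -> G z = 0).
      { intros z Hz. destruct (Rlt_or_le 0 z). rewrite Gp; auto. rewrite Gm, <- Lgpm; auto; lra. }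
      assert (Pos : forall z, 0 < z -> u z * u z + v z * v z = 0).
      { apply (halfline u v u1 v1 u2 v2 kappa h (D+1) Hh).
        - intros; apply Du; lra.
        - intros; apply Dv; lra.
        - intros; apply Du1; lra.
        - intros; apply Dv1; lra.
        - intros z Hz. rewrite (Ou z ltac:(lra)). field.
        - intros z Hz. rewrite (Ov z ltac:(lra)). field.
        - intros z Hz. pose proof (G0 z ltac:(lra)) as X. unfold G in X. cbv beta in X. rewrite <- X. field.
        - intros a b Ha Hab. split. apply Hexf. apply IB; auto. }
      assert (Neg : forall z, 0 < z -> u (-z) * u (-z) + v (-z) * v (-z) = 0).
      { apply (halfline (fun t => u (-t)) (fun t => v (-t)) (fun t => - u1 (-t)) (fun t => - v1 (-t)) (fun t => u2 (-t)) (fun t => v2 (-t)) kappa h (D+1) Hh).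
        - intros z Hz. apply (refl_deriv u u1). apply Du; lra.
        - intros z Hz. apply (refl_deriv v v1). apply Dv; lra.
        - intros z Hz. apply (refl_deriv2 u1 u2). apply Du1; lra.
        - intros z Hz. apply (refl_deriv2 v1 v2). apply Dv1; lra.
        - intros z Hz. cbv beta. rewrite (Ou (-z) ltac:(lra)). field.
        - intros z Hz. cbv beta. rewrite (Ov (-z) ltac:(lra)). field.
        - intros z Hz. cbv beta. pose proof (G0 (-z) ltac:(lra)) as X. unfold G in X. cbv beta in X.
          transitivity (-(v1 (-z) * u (-z) - u1 (-z) * v (-z) + h/2 * (-z * (u (-z) * u (-z) + v (-z) * v (-z))))).
          field. rewrite X. ring.
        - intros a b Ha Hab. destruct (refl_int f Hexf a b) as [Ex Eq].
          assert (Hfe : forall x, f (-x) = - u1 (-x) * - u1 (-x) + - v1 (-x) * - v1 (-x)) by (intros; unfold f; ring).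
          split.
          + apply (ex_RInt_ext (fun t => f (-t))); [intros; apply Hfe | exact Ex].
          + rewrite <- (RInt_ext (fun t => f (-t))) by (intros; apply Hfe). rewrite Eq. apply IB. lra. }
      destruct (Rtotal_order z1 0) as [Hn|[Hz0|Hpz]].
      + pose proof (Neg (-z1) ltac:(lra)) as X. rewrite Ropp_involutive in X. unfold q in Hq1. lra.
      + subst z1. destruct (cont_eps q 0 (Cq 0) (q 0 / 2) ltac:(lra)) as [d [Hd Hdd]].
        pose proof (Pos (d/2) ltac:(lra)) as X. specialize (Hdd (d/2) ltac:(rewrite Rminus_0_r, Rabs_pos_eq; lra)).
        fold (q (d/2)) in X. rewrite X in Hdd. apply Rabs_def2 in Hdd. lra.
      + pose proof (Pos z1 Hpz) as X. unfold q in Hq1. lra. }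
  split; [exact Hsig|]. split; [lra|].
  intros Hsc. rewrite Hsc in Main.
  assert (Ep : p - 1 <> 0) by lra. assert (Ep2 : p + 1 <> 0) by lra.
  assert (E : (1 - (/2 - /(p-1))) * D - (/2 - (/2 - /(p-1))) * P = ((p+1)*D - 2*P) * / (2*(p-1))) by (field; lra).
  rewrite E in Main. apply Rmult_integral in Main. destruct Main as [Main|Main].
  - replace (/ 2 * D - / (p + 1) * P) with (((p+1)*D - 2*P) * / (2*(p+1))) by (field; lra). rewrite Main. ring.
  - exfalso. apply (Rinv_neq_0_compat (2*(p-1))). lra. exact Main.
Qed.
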